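(* Let $\min(p,q)\ge 2$ and let $M_0, M_1, M_2$ be three Minkowski patches of $\widetilde{\mathrm{Ein}}^{p,q}$ with $M_1 \neq \iota(M_2)$, such that for a stereographic projection $s : M_0\to\mathbb{R}^{p,q}$, both $s(M_0\cap M_1)$ and $s(M_0\cap M_2)$ are of the form $H_{w,\alpha}$ with $w\in\mathcal{C}\setminus\{0\}$, $\alpha\in\mathbb{R}$. If $M_0 \cap M_1$ and $M_0 \cap M_2$ are disjoint, then $\iota(M_0) \subset M_1 \cup M_2$.
   Context: $\widetilde{\mathrm{Ein}}^{p,q}\cong\mathbb{S}^p\times\mathbb{S}^q$ is the set of isotropic vectors of Euclidean norm 1 in $\mathbb{R}^{p+1,q+1}$, double covering $\mathrm{Ein}^{p,q}$ (isotropic lines) via $\pi_{\mathbf{X}}$; $\iota$ is the product of antipodal maps. Minkowski patches of $\widetilde{\mathrm{Ein}}^{p,q}$ are the connected components of $\pi_{\mathbf{X}}^{-1}(\{[u]:B(v,u)\neq0\})$, $v$ isotropic. A stereographic projection is a conformal diffeomorphism from a Minkowski patch onto $\mathbb{R}^{p,q}$. On $\mathbb{R}^{p,q}$ ($n=p+q$): $b(v,w) = -v_1w_1 - \cdots - v_pw_p + v_{p+1}w_{p+1} + \cdots + v_nw_n$, $\mathcal{C}=\{v:b(v,v)=0\}$, and $H_{w,\alpha}=\{v: b(w,v)>\alpha\}$. *)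

(* Defs.v *)
From Stdlib Require Import Reals Lra Lia Arith.
Open Scope R_scope.

(* Points of R^k are represented by functions nat -> R supported in [0,k). *)
Definition pt := nat -> R.

Definition supp (k : nat) (x : pt) : Prop := forall i, (k <= i)%nat -> x i = 0.

Fixpoint rsum (k : nat) (f : nat -> R) : R :=
  match k with O => 0 | S k' => rsum k' f + f k' end.

Definition form (m k : nat) (x y : pt) : R :=
  rsum k (fun i => (if Nat.ltb i m then -1 else 1) * x i * y i).

Definition dist (k : nat) (x y : pt) : R :=
  sqrt (rsum k (fun i => (x i - y i) * (x i - y i))).

Definition vadd (x y : pt) : pt := fun i => x i + y i.
Definition vscal (t : R) (x : pt) : pt := fun i => t * x i.
Definition ebasis (j : nat) : pt := fun i => if Nat.eqb i j then 1 else 0.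

Definition set_eq (A B : pt -> Prop) : Prop := forall x, A x <-> B x.
Definition image (f : pt -> pt) (A : pt -> Prop) : pt -> Prop :=
  fun y => exists x, A x /\ y = f x.
Definition inter (A B : pt -> Prop) : pt -> Prop := fun x => A x /\ B x.

(* tilde Ein^{p,q}: isotropic vectors of Euclidean norm 1 in R^{p+1,q+1} *)
Definition Eint (p q : nat) (u : pt) : Prop :=
  supp (p + q + 2) u /\ form (p + 1) (p + q + 2) u u = 0 /\
  rsum (p + q + 2) (fun i => u i * u i) = 1.

(* iota: product of the antipodal maps of S^p x S^q, i.e. u |-> -u *)
Definition iota (u : pt) : pt := fun i => - u i.

Definition locally_const (k : nat) (S : pt -> Prop) (f : pt -> bool) : Prop :=
  forall x, S x -> exists eps, 0 < eps /\
    forall y, S y -> dist k x y < eps -> f y = f x.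

Definition connected (k : nat) (S : pt -> Prop) : Prop :=
  forall f : pt -> bool, locally_const k S f ->
    forall x y, S x -> S y -> f x = f y.

Definition component (k : nat) (X C : pt -> Prop) : Prop :=
  (forall x, C x -> X x) /\ (exists x, C x) /\ connected k C /\
  forall D : pt -> Prop, (forall x, D x -> X x) -> connected k D ->
    (exists x, D x /\ C x) -> forall x, D x -> C x.

(* Minkowski patch of tilde Ein^{p,q}: a connected component of
   pi^{-1}({[u] : B(v,u) <> 0}) = {u in tilde Ein : B(v,u) <> 0}, v isotropic *)
Definition mink_patch (p q : nat) (M : pt -> Prop) : Prop :=
  exists v, supp (p + q + 2) v /\ form (p + 1) (p + q + 2) v v = 0 /\
    component (p + q + 2)
      (fun u => Eint p q u /\ form (p + 1) (p + q + 2) v u <> 0) M.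

Definition open_in (k : nat) (U : pt -> Prop) : Prop :=
  forall x, U x -> supp k x /\ exists eps, 0 < eps /\
    forall y, supp k y -> dist k x y < eps -> U y.

Definition cont_on (k : nat) (U : pt -> Prop) (g : pt -> R) : Prop :=
  forall x, U x -> forall eps, 0 < eps -> exists delta, 0 < delta /\
    forall y, U y -> dist k x y < delta -> Rabs (g y - g x) < eps.

Fixpoint Ck (m k : nat) (U : pt -> Prop) (g : pt -> R) : Prop :=
  match m with
  | O => cont_on k U g
  | S m' => cont_on k U g /\
      forall i, (i < k)%nat -> exists dg : pt -> R,
        (forall x, U x ->
           derivable_pt_lim (fun t => g (vadd x (vscal t (ebasis i)))) 0 (dg x))
        /\ Ck m' k U dg
  end.

Definition smooth (k : nat) (U : pt -> Prop) (g : pt -> R) : Prop :=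
  forall m, Ck m k U g.

Definition smooth_map (k l : nat) (U : pt -> Prop) (F : pt -> pt) : Prop :=
  open_in k U /\ (forall x, U x -> supp l (F x)) /\
  forall j, (j < l)%nat -> smooth k U (fun x => F x j).

(* Stereographic projection: a conformal diffeomorphism s : M0 -> R^{p,q}.
   - s is a bijection of M0 onto R^n (n = p+q);
   - s is smooth on the embedded submanifold M0 (locally the restriction of a
     smooth map defined on an open set of R^{n+2});
   - its inverse phi : R^n -> M0 is smooth;
   - conformality: the pull-back by phi of the (conformal class of the)
     metric B restricted to tilde Ein is a positive multiple of b. *)
Definition is_stereo (p q : nat) (M0 : pt -> Prop) (s : pt -> pt) : Prop :=
  let n := (p + q)%nat in
  let N := (p + q + 2)%nat in
  (forall u, M0 u -> supp n (s u)) /\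
  (forall u u', M0 u -> M0 u' -> s u = s u' -> u = u') /\
  (forall y, supp n y -> exists u, M0 u /\ s u = y) /\
  (forall u, M0 u -> exists U : pt -> Prop, U u /\
      exists F, smooth_map N n U F /\ forall u', U u' -> M0 u' -> F u' = s u') /\
  exists phi : pt -> pt,
    (forall y, supp n y -> M0 (phi y) /\ s (phi y) = y) /\
    smooth_map n N (supp n) phi /\
    forall y, supp n y -> exists mu, 0 < mu /\
      forall xi eta a c : pt, supp n xi -> supp n eta ->
        (forall j, (j < N)%nat ->
           derivable_pt_lim (fun t => phi (vadd y (vscal t xi)) j) 0 (a j)) ->
        (forall j, (j < N)%nat ->
           derivable_pt_lim (fun t => phi (vadd y (vscal t eta)) j) 0 (c j)) ->
        form (p + 1) N a c = mu * form p n xi eta.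

Definition in_cone (p q : nat) (w : pt) : Prop :=
  supp (p + q) w /\ form p (p + q) w w = 0.

Definition Hwa (p q : nat) (w : pt) (alpha : R) : pt -> Prop :=
  fun v => supp (p + q) v /\ form p (p + q) w v > alpha.

(* Main.v *)
Require Import Defs.
From Stdlib Require Import Reals Lra Lia Arith FunctionalExtensionality ClassicalEpsilon Classical.
Import Defs.
Open Scope R_scope.

Lemma rsum_ext k f g : (forall i, (i < k)%nat -> f i = g i) -> rsum k f = rsum k g.
Proof. induction k; simpl; intros H; auto. rewrite IHk by (intros; apply H; lia). rewrite (H k) by lia; auto. Qed.

Lemma rsum_lin k a b f g : rsum k (fun i => a * f i + b * g i) = a * rsum k f + b * rsum k g.
Proof. induction k; simpl. ring. rewrite IHk. ring. Qed.

Lemma rsum_nonneg k f : (forall i, (i < k)%nat -> 0 <= f i) -> 0 <= rsum k f.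
Proof. induction k; simpl; intros H. lra. assert (0 <= f k) by (apply H; lia).
 assert (0 <= rsum k f) by (apply IHk; intros; apply H; lia). lra. Qed.

Lemma rsum_le k f g : (forall i, (i < k)%nat -> f i <= g i) -> rsum k f <= rsum k g.
Proof. induction k; simpl; intros H. lra. assert (f k <= g k) by (apply H; lia).
 assert (rsum k f <= rsum k g) by (apply IHk; intros; apply H; lia). lra. Qed.

Lemma rsum_term k f j : (forall i, (i < k)%nat -> 0 <= f i) -> (j < k)%nat -> f j <= rsum k f.
Proof. induction k; simpl; intros H Hj. lia.
 assert (0 <= rsum k f) by (apply rsum_nonneg; intros; apply H; lia).
 destruct (Nat.eq_dec j k). subst; lra.
 assert (f j <= rsum k f) by (apply IHk; [intros; apply H; lia| lia]).
 assert (0 <= f k) by (apply H; lia). lra. Qed.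

Lemma rsum_zero k f : (forall i, (i < k)%nat -> 0 <= f i) -> rsum k f = 0 -> forall i, (i < k)%nat -> f i = 0.
Proof. intros H H0 i Hi. assert (f i <= rsum k f) by (apply rsum_term; auto).
 assert (0 <= f i) by auto. lra. Qed.

Lemma rsum_abs k f : Rabs (rsum k f) <= rsum k (fun i => Rabs (f i)).
Proof. induction k; simpl. rewrite Rabs_R0; lra.
 eapply Rle_trans. apply Rabs_triang. lra. Qed.

Lemma rsum_single k f j : (j < k)%nat -> (forall i, (i < k)%nat -> i <> j -> f i = 0) -> rsum k f = f j.
Proof. induction k; simpl; intros Hj H. lia.
 destruct (Nat.eq_dec j k). subst.
 rewrite (rsum_ext _ _ (fun _ => 0)). 2:{ intros; apply H; lia. }
 assert (rsum k (fun _ => 0) = 0) by (clear; induction k; simpl; lra). lra.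
 rewrite IHk by (auto; lia). rewrite (H k) by lia. ring. Qed.

Definition sg (m i : nat) : R := if Nat.ltb i m then -1 else 1.

Lemma sg_sq m i : sg m i * sg m i = 1.
Proof. unfold sg; destruct (Nat.ltb i m); ring. Qed.

Lemma form_sym m k x y : form m k x y = form m k y x.
Proof. unfold form. apply rsum_ext; intros; ring. Qed.

Lemma form_lin_r m k x a b y z : form m k x (fun i => a * y i + b * z i) = a * form m k x y + b * form m k x z.
Proof. unfold form. rewrite <- rsum_lin. apply rsum_ext; intros; ring. Qed.

Lemma form_lin_l m k x a b y z : form m k (fun i => a * y i + b * z i) x = a * form m k y x + b * form m k z x.
Proof. unfold form. rewrite <- rsum_lin. apply rsum_ext; intros; ring. Qed.

Lemma form_ext m k x y x' y' : (forall i, (i<k)%nat -> x i = x' i) -> (forall i, (i<k)%nat -> y i = y' i) ->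
  form m k x y = form m k x' y'.
Proof. intros H1 H2; unfold form; apply rsum_ext; intros; rewrite H1, H2 by auto; ring. Qed.

Lemma form_scal_r m k x c y : form m k x (fun i => c * y i) = c * form m k x y.
Proof. rewrite (form_ext m k x _ x (fun i => c * y i + 0 * y i)) by (intros; ring; auto).
 rewrite form_lin_r; ring. Qed.

Lemma form_scal_l m k x c y : form m k (fun i => c * y i) x = c * form m k y x.
Proof. rewrite form_sym, form_scal_r, form_sym; auto. Qed.

Lemma form_add_r m k x y z : form m k x (fun i => y i + z i) = form m k x y + form m k x z.
Proof. rewrite (form_ext m k x _ x (fun i => 1 * y i + 1 * z i)) by (intros; ring; auto).
 rewrite form_lin_r; ring. Qed.

Lemma form_add_l m k x y z : form m k (fun i => y i + z i) x = form m k y x + form m k z x.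
Proof. rewrite form_sym, form_add_r, (form_sym _ _ x y), (form_sym _ _ x z); auto. Qed.

Lemma form_zero_r m k x : form m k x (fun _ => 0) = 0.
Proof. rewrite (form_ext m k x _ x (fun i => 0 * x i)) by (intros; ring; auto).
 rewrite form_scal_r; ring. Qed.

Definition ed (k : nat) (x y : pt) : R := rsum k (fun i => x i * y i).

Lemma ed_nonneg k x : 0 <= ed k x x.
Proof. apply rsum_nonneg; intros; apply Rle_0_sqr. Qed.

Lemma ed_pos_of_form m k v x : form m k v x <> 0 -> 0 < ed k x x.
Proof. intros H. destruct (Rle_lt_or_eq_dec _ _ (ed_nonneg k x)) as [|E]; auto.
 exfalso; apply H. symmetry in E.
 assert (forall i, (i<k)%nat -> x i * x i = 0) by (apply rsum_zero; auto; intros; apply Rle_0_sqr).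
 unfold form. rewrite (rsum_ext _ _ (fun _ => 0)).
 clear; induction k; simpl; lra.
 intros i Hi. assert (x i = 0) by (apply Rsqr_0_uniq; apply H0; auto). rewrite H1; ring. Qed.

Definition nrmz (k : nat) (x : pt) : pt := fun i => x i / sqrt (ed k x x).

Lemma normalize_E p q x : supp (p+q+2) x -> form (p+1) (p+q+2) x x = 0 -> 0 < ed (p+q+2) x x ->
  Eint p q (nrmz (p+q+2) x).
Proof. intros Hs Hf Hp. set (n := sqrt (ed (p+q+2) x x)).
 assert (Hn : 0 < n) by (apply sqrt_lt_R0; auto).
 split; [|split].
 - intros i Hi; unfold nrmz; rewrite Hs by auto; unfold Rdiv; ring.
 - unfold nrmz. rewrite (form_ext _ _ _ _ (fun i => / n * x i) (fun i => / n * x i)) by (intros; unfold n, Rdiv; ring).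
   rewrite form_scal_l, form_scal_r, Hf; ring.
 - unfold nrmz. rewrite (rsum_ext _ _ (fun i => (/ (n*n)) * (x i * x i) + 0 * x i)).
   rewrite rsum_lin. unfold n. fold (ed (p+q+2) x x). rewrite sqrt_sqrt by lra. field; lra.
   intros; fold n; field; lra. Qed.

Lemma normalize_form m k x v : 0 < ed k x x -> form m k v (nrmz k x) = form m k v x / sqrt (ed k x x).
Proof. intros Hp. unfold nrmz. rewrite (form_ext _ _ _ _ v (fun i => / sqrt (ed k x x) * x i)) by (intros; unfold Rdiv; ring; auto).
 rewrite form_scal_r. unfold Rdiv; ring. Qed.

Lemma normalize_sign m k x v : 0 < ed k x x -> 0 < form m k v x -> 0 < form m k v (nrmz k x).
Proof. intros Hp Hv. rewrite normalize_form by auto. apply Rdiv_lt_0_compat; auto. apply sqrt_lt_R0; auto. Qed.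

Lemma Rabs_le_b x a : Rabs x <= a -> - a <= x <= a.
Proof. unfold Rabs; destruct (Rcase_abs x); intros; lra. Qed.

Lemma coord_le_dist k x y j : (j < k)%nat -> Rabs (x j - y j) <= dist k x y.
Proof. intros Hj. unfold dist. rewrite <- sqrt_Rsqr_abs. apply sqrt_le_1_alt.
 unfold Rsqr. apply (rsum_term k (fun i => (x i - y i) * (x i - y i))); auto.
 intros; apply Rle_0_sqr. Qed.

Lemma dist_nonneg k x y : 0 <= dist k x y.
Proof. apply sqrt_pos. Qed.

Lemma form_cont m k v x y : Rabs (form m k v x - form m k v y) <= rsum k (fun i => Rabs (v i)) * dist k x y.
Proof.
 assert (E : form m k v x - form m k v y = rsum k (fun i => sg m i * v i * (x i - y i))).
 { unfold form. rewrite (rsum_ext k (fun i => sg m i * v i * (x i - y i))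
       (fun i => 1 * ((if Nat.ltb i m then -1 else 1) * v i * x i) + (-1) * ((if Nat.ltb i m then -1 else 1) * v i * y i))).
   rewrite rsum_lin; ring. intros; unfold sg; ring. }
 rewrite E. eapply Rle_trans. apply rsum_abs.
 rewrite <- (Rplus_0_r (_ * _)). rewrite <- (Rmult_0_l (rsum k (fun i => 0))).
 rewrite Rmult_comm, <- rsum_lin. apply rsum_le. intros i Hi.
 rewrite !Rabs_mult. replace (Rabs (sg m i)) with 1 by (unfold sg; destruct (Nat.ltb i m); [rewrite Rabs_left by lra; ring|rewrite Rabs_R1]; auto).
 assert (Rabs (x i - y i) <= dist k x y) by (apply coord_le_dist; auto).
 assert (0 <= Rabs (v i)) by apply Rabs_pos. nra. Qed.

Lemma sign_const m k v (S : pt -> Prop) : connected k S -> (forall u, S u -> form m k v u <> 0) ->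
  forall x y, S x -> S y -> 0 < form m k v x -> 0 < form m k v y.
Proof.
 intros Hc Hnz x y Sx Sy Px.
 set (f := fun u => if Rlt_dec 0 (form m k v u) then true else false).
 assert (Hf : f x = f y).
 { apply Hc; auto. intros z Sz. set (c := Rabs (form m k v z)). set (C := rsum k (fun i => Rabs (v i)) + 1).
   assert (Hc0 : 0 < c) by (apply Rabs_pos_lt; auto).
   assert (HC : 0 < C). { unfold C. assert (0 <= rsum k (fun i => Rabs (v i))) by (apply rsum_nonneg; intros; apply Rabs_pos). lra. }
   exists (c / C). split. apply Rdiv_lt_0_compat; auto.
   intros w Sw Hd. assert (H1 := form_cont m k v z w). assert (H2 := dist_nonneg k z w).
   assert (H3 : rsum k (fun i => Rabs (v i)) * dist k z w < c).
   { assert (0 <= rsum k (fun i => Rabs (v i))) by (apply rsum_nonneg; intros; apply Rabs_pos).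
     assert (C * dist k z w < c). { apply (Rmult_lt_compat_l C) in Hd; auto. unfold Rdiv in Hd.
       rewrite <- Rmult_assoc, (Rmult_comm C c), Rmult_assoc, Rinv_r, Rmult_1_r in Hd; lra. }
     unfold C in H0; nra. }
   unfold f. unfold c in *. destruct (Rlt_dec 0 (form m k v w)); destruct (Rlt_dec 0 (form m k v z)); auto; exfalso.
   - assert (form m k v z <> 0) by auto. rewrite Rabs_left in H3 by lra.
     apply Rabs_le_b in H1 as [? ?]. nra.
   - assert (form m k v w <> 0) by auto. rewrite Rabs_right in H3 by lra.
     apply Rabs_le_b in H1 as [? ?]. lra. }
 unfold f in Hf. destruct (Rlt_dec 0 (form m k v x)); destruct (Rlt_dec 0 (form m k v y)); auto; try discriminate; lra.
Qed.

Lemma cpt_div f g x : continuity_pt f x -> continuity_pt g x -> g x <> 0 -> continuity_pt (fun t => f t / g t) x.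
Proof. exact (continuity_pt_div f g x). Qed.
Lemma cpt_mult f g x : continuity_pt f x -> continuity_pt g x -> continuity_pt (fun t => f t * g t) x.
Proof. exact (continuity_pt_mult f g x). Qed.
Lemma cpt_plus f g x : continuity_pt f x -> continuity_pt g x -> continuity_pt (fun t => f t + g t) x.
Proof. exact (continuity_pt_plus f g x). Qed.
Lemma cpt_minus f g x : continuity_pt f x -> continuity_pt g x -> continuity_pt (fun t => f t - g t) x.
Proof. exact (continuity_pt_minus f g x). Qed.
Lemma cpt_opp f x : continuity_pt f x -> continuity_pt (fun t => - f t) x.
Proof. exact (continuity_pt_opp f x). Qed.
Lemma cpt_const c x : continuity_pt (fun _ => c) x.
Proof. apply continuity_pt_const. intros a b; auto. Qed.
Lemma cpt_sqrt f x : continuity_pt f x -> 0 <= f x -> continuity_pt (fun t => sqrt (f t)) x.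
Proof. intros H1 H2. apply (continuity_pt_comp f sqrt x); auto. apply continuity_pt_sqrt; auto. Qed.
Lemma cpt_sin x : continuity_pt sin x.
Proof. apply continuity_sin. Qed.

Lemma cont_rsum k (F : nat -> R -> R) t0 : (forall i, (i < k)%nat -> continuity_pt (F i) t0) ->
  continuity_pt (fun t => rsum k (fun i => F i t)) t0.
Proof. induction k; simpl; intros H. apply cpt_const.
 apply cpt_plus. apply IHk; intros; apply H; lia. apply H; lia. Qed.

Lemma cont_form m k (X Y : R -> pt) t0 : (forall i, (i < k)%nat -> continuity_pt (fun t => X t i) t0) ->
  (forall i, (i < k)%nat -> continuity_pt (fun t => Y t i) t0) ->
  continuity_pt (fun t => form m k (X t) (Y t)) t0.
Proof. intros HX HY. unfold form.
 apply (cont_rsum k (fun i t => (if Nat.ltb i m then -1 else 1) * X t i * Y t i)).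
 intros i Hi. apply cpt_mult. apply cpt_mult. apply cpt_const. auto. auto. Qed.

Definition yv (u u' : pt) (t : R) : pt := fun i => (1-t)*u i + t*u' i.
Definition lam m N (v y : pt) := - form m N y y / (2 * form m N v y).
Definition xv m N v u u' t : pt := fun i => yv u u' t i + lam m N v (yv u u' t) * v i.
Definition tau t := (1 + sin t)/2.
Definition pth m N v u u' t := nrmz N (xv m N v u u' (tau t)).

Lemma tau_range t : 0 <= tau t <= 1.
Proof. unfold tau; destruct (SIN_bound t); lra. Qed.

Section Path.
Variables (m N : nat) (v u u' : pt).
Hypothesis Hvv : form m N v v = 0.
Hypothesis Hu : form m N u u = 0.
Hypothesis Hu' : form m N u' u' = 0.
Hypothesis Hvu : 0 < form m N v u.
Hypothesis Hvu' : 0 < form m N v u'.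

Lemma beta_pos t : 0 <= t <= 1 -> 0 < form m N v (yv u u' t).
Proof. intros Ht. unfold yv. rewrite form_lin_r. nra. Qed.

Lemma xv_null t : 0 <= t <= 1 -> form m N (xv m N v u u' t) (xv m N v u u' t) = 0.
Proof. intros Ht. assert (Hb := beta_pos t Ht). unfold xv.
 set (y := yv u u' t). set (l := lam m N v y).
 rewrite (form_ext m N _ _ (fun i => 1 * y i + l * v i) (fun i => 1 * y i + l * v i)) by (intros; ring; auto).
 rewrite form_lin_l, !form_lin_r. rewrite Hvv, (form_sym m N y v).
 unfold l, lam. fold y in Hb. field. lra. Qed.

Lemma xv_beta t : form m N v (xv m N v u u' t) = form m N v (yv u u' t).
Proof. unfold xv. rewrite (form_ext m N _ _ v (fun i => 1 * yv u u' t i + lam m N v (yv u u' t) * v i)) by (intros; ring; auto).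
 rewrite form_lin_r, Hvv. ring. Qed.

Lemma xv_pos t : 0 <= t <= 1 -> 0 < form m N v (xv m N v u u' t).
Proof. intros; rewrite xv_beta; apply beta_pos; auto. Qed.

Lemma ed_xv_pos t : 0 <= t <= 1 -> 0 < ed N (xv m N v u u' t) (xv m N v u u' t).
Proof. intros Ht. apply (ed_pos_of_form m N v). assert (H := xv_pos t Ht). lra. Qed.

Lemma cont_y t0 i : continuity_pt (fun t => yv u u' (tau t) i) t0.
Proof. unfold yv, tau. apply cpt_plus; apply cpt_mult; try apply cpt_const.
 apply cpt_minus. apply cpt_const. apply cpt_div. apply cpt_plus. apply cpt_const. apply cpt_sin. apply cpt_const. lra.
 apply cpt_div. apply cpt_plus. apply cpt_const. apply cpt_sin. apply cpt_const. lra. Qed.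

Lemma cont_x t0 i : continuity_pt (fun t => xv m N v u u' (tau t) i) t0.
Proof. unfold xv. apply cpt_plus. apply cont_y. apply cpt_mult; [|apply cpt_const].
 unfold lam. apply cpt_div. apply cpt_opp. apply cont_form; intros; apply cont_y.
 apply cpt_mult. apply cpt_const. apply cont_form; intros. apply cpt_const. apply cont_y.
 assert (H := beta_pos (tau t0) (tau_range t0)). lra. Qed.

Lemma cont_pth t0 j : continuity_pt (fun t => pth m N v u u' t j) t0.
Proof. unfold pth, nrmz. apply cpt_div. apply cont_x.
 apply cpt_sqrt. unfold ed. apply (cont_rsum N (fun i t => xv m N v u u' (tau t) i * xv m N v u u' (tau t) i)).
 intros; apply cpt_mult; apply cont_x. apply ed_nonneg.
 assert (H := ed_xv_pos (tau t0) (tau_range t0)). assert (0 < sqrt (ed N (xv m N v u u' (tau t0)) (xv m N v u u' (tau t0)))) by (apply sqrt_lt_R0; auto). lra. Qed.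

Lemma cont_dist t0 : continuity_pt (fun t => dist N (pth m N v u u' t0) (pth m N v u u' t)) t0.
Proof. unfold dist. apply cpt_sqrt.
 apply (cont_rsum N (fun j t => (pth m N v u u' t0 j - pth m N v u u' t j) * (pth m N v u u' t0 j - pth m N v u u' t j))).
 intros; apply cpt_mult; apply cpt_minus; try apply cpt_const; apply cont_pth.
 apply rsum_nonneg; intros; apply Rle_0_sqr. Qed.

Lemma dist_self k x : dist k x x = 0.
Proof. unfold dist. rewrite (rsum_ext _ _ (fun _ => 0)). replace (rsum k (fun _ => 0)) with 0. apply sqrt_0.
 clear; induction k; simpl; lra. intros; ring. Qed.

End Path.

Lemma sin_mPI2 : sin (- (PI/2)) = -1.
Proof. rewrite sin_neg, sin_PI2; ring. Qed.

Lemma P_connected p q v : supp (p+q+2) v -> form (p+1) (p+q+2) v v = 0 ->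
  connected (p+q+2) (fun u => Eint p q u /\ form (p+1) (p+q+2) v u > 0).
Proof.
 intros Hsv Hvv f Hlc x y [Ex Px] [Ey Py].
 set (m := (p+1)%nat) in *. set (N := (p+q+2)%nat) in *.
 destruct Ex as [Sx [Nx Ux]]. destruct Ey as [Sy [Ny Uy]]. fold N m in Sx, Nx, Ux, Sy, Ny, Uy.
 assert (Inp : forall t, Eint p q (pth m N v x y t) /\ form m N v (pth m N v x y t) > 0).
 { intros t. assert (Ht := tau_range t). unfold pth. split.
   - apply normalize_E. intros i Hi. unfold xv, yv. rewrite Sx, Sy, Hsv by auto. ring.
     apply xv_null; auto. apply ed_xv_pos; auto.
   - apply Rlt_gt, normalize_sign. apply ed_xv_pos; auto. apply xv_pos; auto. }
 assert (End : forall z, supp N z -> form m N z z = 0 -> rsum N (fun i => z i * z i) = 1 ->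
   forall t, yv x y t = z -> nrmz N (xv m N v x y t) = z).
 { intros z Sz Nz Uz t Hyv. apply functional_extensionality; intros i.
   assert (Xz : forall i, xv m N v x y t i = z i). { intros j. unfold xv. rewrite Hyv. unfold lam. rewrite Nz. unfold Rdiv. ring. }
   unfold nrmz. rewrite Xz. unfold ed. rewrite (rsum_ext _ _ (fun i => z i * z i)) by (intros; rewrite Xz; auto).
   rewrite Uz, sqrt_1. field. }
 assert (E0 : pth m N v x y (- (PI/2)) = x).
 { unfold pth, tau. rewrite sin_mPI2. replace ((1 + -1)/2) with 0 by field.
   apply End; auto. apply functional_extensionality; intros i; unfold yv; ring. }
 assert (E1 : pth m N v x y (PI/2) = y).
 { unfold pth, tau. rewrite sin_PI2. replace ((1 + 1)/2) with 1 by field.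
   apply End; auto. apply functional_extensionality; intros i; unfold yv; ring. }
 set (h := fun t => if f (pth m N v x y t) then 1 else 0).
 assert (Hh : continuity h).
 { intros t0. destruct (Hlc (pth m N v x y t0) (Inp t0)) as [eps [He Hl]].
   assert (Hc := cont_dist m N v x y Hvv Px Py t0).
   unfold continuity_pt, continue_in, limit1_in, limit_in in Hc. destruct (Hc eps He) as [alp [Ha Hal]].
   unfold continuity_pt, continue_in, limit1_in, limit_in. intros e' He'. exists alp. split; auto.
   intros t [[_ Hne] Hd]. simpl in *. unfold R_dist in *.
   assert (Hft : f (pth m N v x y t) = f (pth m N v x y t0)).
   { apply Hl. apply Inp. specialize (Hal t (conj (conj I Hne) Hd)). simpl in Hal. unfold R_dist in Hal.
     rewrite dist_self in Hal. rewrite Rminus_0_r in Hal. apply Rabs_def2 in Hal. lra. }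
   unfold h. rewrite Hft. unfold Rminus; rewrite Rplus_opp_r, Rabs_R0; auto. }
 assert (HP : - (PI/2) < PI/2) by (assert (H := PI_RGT_0); lra).
 destruct (f x) eqn:Fx; destruct (f y) eqn:Fy; auto; exfalso.
 - destruct (IVT (fun t => 1/2 - h t) _ _ (continuity_minus _ _ (continuity_const (fun _ => 1/2) (fun _ _ => eq_refl)) Hh) HP) as [z [_ Hz]].
   unfold h; rewrite E0, Fx; lra. unfold h; rewrite E1, Fy; lra.
   unfold h in Hz; destruct (f (pth m N v x y z)); lra.
 - destruct (IVT (fun t => h t - 1/2) _ _ (continuity_minus _ _ Hh (continuity_const (fun _ => 1/2) (fun _ _ => eq_refl))) HP) as [z [_ Hz]].
   unfold h; rewrite E0, Fx; lra. unfold h; rewrite E1, Fy; lra.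
   unfold h in Hz; destruct (f (pth m N v x y z)); lra.
Qed.

Lemma form_neg_l m k v u : form m k (fun i => - v i) u = - form m k v u.
Proof. rewrite (form_ext m k _ _ (fun i => -1 * v i) u) by (intros; ring; auto). rewrite form_scal_l; ring. Qed.

Lemma patch_char p q M : mink_patch p q M -> exists v, supp (p+q+2) v /\ form (p+1) (p+q+2) v v = 0 /\
  (forall u, M u <-> Eint p q u /\ form (p+1) (p+q+2) v u > 0).
Proof.
 intros [v [Sv [Nv [Hsub [[x0 Hx0] [Hcon Hmax]]]]]].
 destruct (Hsub x0 Hx0) as [E0 NZ0].
 assert (Hgen : forall w, supp (p+q+2) w -> form (p+1) (p+q+2) w w = 0 ->
    (forall u, form (p+1) (p+q+2) w u = form (p+1) (p+q+2) v u \/ form (p+1) (p+q+2) w u = - form (p+1) (p+q+2) v u) ->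
    (forall u, form (p+1) (p+q+2) w u = 0 -> form (p+1) (p+q+2) v u = 0) ->
    form (p+1) (p+q+2) w x0 > 0 ->
    exists v, supp (p+q+2) v /\ form (p+1) (p+q+2) v v = 0 /\
     (forall u, M u <-> Eint p q u /\ form (p+1) (p+q+2) v u > 0)).
 { intros w Sw Nw Hw Hw0 Px0. exists w. split; auto. split; auto. intros u. split.
   - intros Mu. destruct (Hsub u Mu) as [Eu NZu]. split; auto.
     apply Rlt_gt. apply (sign_const (p+1) (p+q+2) w M Hcon) with x0; auto.
     intros z Mz Hz. apply Hw0 in Hz. destruct (Hsub z Mz); auto.
   - intros Pu. apply (Hmax (fun u => Eint p q u /\ form (p+1) (p+q+2) w u > 0)).
     + intros z [Ez Pz]. split; auto. intros Hz. destruct (Hw z); lra.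
     + apply P_connected; auto.
     + exists x0; split; auto.
     + auto. }
 destruct (Rlt_or_le 0 (form (p+1) (p+q+2) v x0)).
 - apply (Hgen v); auto.
 - apply (Hgen (fun i => - v i)).
   + intros i Hi; rewrite Sv by auto; ring.
   + rewrite form_neg_l, form_sym, form_neg_l, Nv; ring.
   + intros u; right; apply form_neg_l.
   + intros u; rewrite form_neg_l; lra.
   + rewrite form_neg_l. assert (form (p+1) (p+q+2) v x0 <> 0) by auto. lra.
Qed.

Lemma fchoice {A : Type} (P : nat -> A -> Prop) : (forall k, exists a, P k a) -> exists f, forall k, P k (f k).
Proof. intros H. exists (fun k => proj1_sig (constructive_indefinite_description _ (H k))). intros k. apply proj2_sig. Qed.

Lemma dpl_mult f g x lf lg : derivable_pt_lim f x lf -> derivable_pt_lim g x lg ->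
  derivable_pt_lim (fun t => f t * g t) x (lf * g x + f x * lg).
Proof. exact (derivable_pt_lim_mult f g x lf lg). Qed.
Lemma dpl_plus f g x lf lg : derivable_pt_lim f x lf -> derivable_pt_lim g x lg ->
  derivable_pt_lim (fun t => f t + g t) x (lf + lg).
Proof. exact (derivable_pt_lim_plus f g x lf lg). Qed.
Lemma dpl_const c x : derivable_pt_lim (fun _ => c) x 0.
Proof. exact (derivable_pt_lim_const c x). Qed.
Lemma dpl_eq f x l l' : l = l' -> derivable_pt_lim f x l -> derivable_pt_lim f x l'.
Proof. intros ->; auto. Qed.

Lemma rsum_add k f g : rsum k (fun i => f i + g i) = rsum k f + rsum k g.
Proof. induction k; simpl. ring. rewrite IHk. ring. Qed.

Lemma deriv_rsum k (F : nat -> R -> R) dF t0 : (forall i, (i < k)%nat -> derivable_pt_lim (F i) t0 (dF i)) ->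
  derivable_pt_lim (fun t => rsum k (fun i => F i t)) t0 (rsum k dF).
Proof. induction k; simpl; intros H. apply dpl_const.
 apply dpl_plus. apply IHk; intros; apply H; lia. apply H; lia. Qed.

Lemma deriv_form m k (X Y : R -> pt) dX dY t0 :
  (forall i, (i < k)%nat -> derivable_pt_lim (fun t => X t i) t0 (dX i)) ->
  (forall i, (i < k)%nat -> derivable_pt_lim (fun t => Y t i) t0 (dY i)) ->
  derivable_pt_lim (fun t => form m k (X t) (Y t)) t0 (form m k dX (Y t0) + form m k (X t0) dY).
Proof. intros HX HY. unfold form.
 eapply dpl_eq; [| apply (deriv_rsum k (fun i t => (if Nat.ltb i m then -1 else 1) * X t i * Y t i)
    (fun i => (if Nat.ltb i m then -1 else 1) * (dX i * Y t0 i + X t0 i * dY i)))].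
 - rewrite <- rsum_add. apply rsum_ext; intros; ring.
 - intros i Hi. eapply dpl_eq; [| apply dpl_mult; [apply dpl_mult; [apply dpl_const | apply HX; auto] | apply HY; auto]].
   cbv beta; ring. Qed.

Lemma line_shift (g : pt -> R) y e t d :
  derivable_pt_lim (fun s => g (vadd (vadd y (vscal t e)) (vscal s e))) 0 d ->
  derivable_pt_lim (fun s => g (vadd y (vscal s e))) t d.
Proof. intros H.
 assert (Heq : forall s, vadd (vadd y (vscal t e)) (vscal s e) = vadd y (vscal (t+s) e)).
 { intros s; apply functional_extensionality; intros i; unfold vadd, vscal; ring. }
 intros eps He. destruct (H eps He) as [del Hd]. exists del. intros h Hh Hhd.
 specialize (Hd h Hh Hhd). rewrite !Heq in Hd. replace (t + (0+h)) with (t+h) in Hd by ring.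
 replace (t+0) with t in Hd by ring. exact Hd. Qed.

Lemma second_pos (k k1 : R -> R) k2 : (forall t, derivable_pt_lim k t (k1 t)) -> derivable_pt_lim k1 0 k2 ->
  k1 0 = 0 -> k 0 = 0 -> 0 < k2 -> exists d, 0 < d /\ 0 < k d /\ 0 < k (-d).
Proof.
 intros Hk Hk1 E1 E0 Hp.
 destruct (Hk1 (k2/2) ltac:(lra)) as [del Hd].
 assert (Hq : forall c, c <> 0 -> Rabs c < del -> 0 < k1 c / c).
 { intros c Hc Hcd. specialize (Hd c Hc Hcd). rewrite Rplus_0_l, E1, Rminus_0_r in Hd.
   apply Rabs_def2 in Hd. lra. }
 assert (Hdel := cond_pos del).
 exists (del/2). split. lra. split.
 - destruct (MVT_cor2 k k1 0 (del/2) ltac:(lra) (fun c _ => Hk c)) as [c [Hc [Hc1 Hc2]]].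
   assert (0 < k1 c / c) by (apply Hq; [lra | rewrite Rabs_right by lra; lra]).
   assert (0 < k1 c). { replace (k1 c) with ((k1 c / c) * c) by (field; lra). nra. }
   rewrite E0 in Hc. nra.
 - destruct (MVT_cor2 k k1 (-(del/2)) 0 ltac:(lra) (fun c _ => Hk c)) as [c [Hc [Hc1 Hc2]]].
   assert (0 < k1 c / c) by (apply Hq; [lra | rewrite Rabs_left by lra; lra]).
   assert (k1 c < 0). { replace (k1 c) with ((k1 c / c) * c) by (field; lra). nra. }
   rewrite E0 in Hc. nra.
Qed.

Lemma form_ebasis m k j : (j < k)%nat -> form m k (ebasis j) (ebasis j) = sg m j.
Proof. intros Hj. unfold form. rewrite (rsum_single k _ j Hj).
 unfold ebasis, sg. rewrite Nat.eqb_refl. ring.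
 intros i Hi Hne. unfold ebasis. apply Nat.eqb_neq in Hne. rewrite Hne. ring. Qed.

Lemma ortho p q M0 M1 s v0 v1 w alpha :
  (1 <= p)%nat -> (1 <= q)%nat ->
  (forall u, M0 u <-> Eint p q u /\ form (p+1) (p+q+2) v0 u > 0) ->
  supp (p+q+2) v1 -> form (p+1) (p+q+2) v1 v1 = 0 ->
  (forall u, M1 u <-> Eint p q u /\ form (p+1) (p+q+2) v1 u > 0) ->
  (exists x, M1 x) ->
  is_stereo p q M0 s ->
  set_eq (image s (inter M0 M1)) (Hwa p q w alpha) ->
  form (p+1) (p+q+2) v0 v1 = 0.
Proof.
 intros Hp Hq HM0 Sv1 Nv1 HM1 [x1 Mx1] Hst Himg.
 set (m := (p+1)%nat) in *. set (N := (p+q+2)%nat) in *. set (n := (p+q)%nat).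
 destruct (Req_dec (form m N v0 v1) 0) as [|Hne]; auto. exfalso.
 assert (Hed1 : 0 < ed N v1 v1).
 { apply (ed_pos_of_form m N x1). rewrite form_sym. apply HM1 in Mx1. destruct Mx1. lra. }
 set (sig := if Rlt_dec 0 (form m N v0 v1) then 1 else -1).
 assert (Hsig2 : sig * sig = 1) by (unfold sig; destruct Rlt_dec; ring).
 assert (Hsigp : 0 < sig * form m N v0 v1) by (unfold sig; destruct Rlt_dec; lra).
 set (z := fun i => sig * v1 i).
 assert (Edz : ed N z z = ed N v1 v1).
 { unfold ed, z. apply rsum_ext; intros. replace (sig * v1 i * (sig * v1 i)) with ((sig*sig) * (v1 i * v1 i)) by ring. rewrite Hsig2; ring. }
 set (nn := sqrt (ed N z z)).
 assert (Hnn : 0 < nn) by (apply sqrt_lt_R0; lra).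
 set (p1 := nrmz N z).
 set (lm := sig / nn).
 assert (Hsig0 : sig <> 0) by (unfold sig; destruct Rlt_dec; lra).
 assert (Hlm : lm <> 0) by (unfold lm, Rdiv; apply Rmult_integral_contrapositive_currified; [auto| apply Rinv_neq_0_compat; lra]).
 assert (Hp1 : forall i, p1 i = lm * v1 i) by (intros; unfold p1, nrmz; fold nn; unfold z, lm; field; lra).
 assert (Hv1 : forall X, form m N v1 X = / lm * form m N p1 X).
 { intros X. rewrite (form_ext m N p1 X (fun i => lm * v1 i) X) by auto. rewrite form_scal_l. field; auto. }
 assert (Nz : form m N z z = 0) by (unfold z; rewrite form_scal_l, form_scal_r, Nv1; ring).
 assert (Ep1 : Eint p q p1). { apply normalize_E. intros i Hi; unfold z; rewrite Sv1 by auto; ring. auto. fold N; lra. }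
 assert (M0p1 : M0 p1). { apply HM0. split; auto. apply Rlt_gt, normalize_sign. lra. unfold z. rewrite form_scal_r. auto. }
 assert (F1p1 : form m N v1 p1 = 0) by (unfold p1; rewrite normalize_form by (fold N; lra); unfold z; rewrite form_scal_r, Nv1; unfold Rdiv; ring).
 assert (NM1p1 : ~ M1 p1) by (intros H; apply HM1 in H; destruct H; lra).
 unfold is_stereo in Hst. cbv zeta in Hst.
 destruct Hst as [Hs [Hinj [Hsurj [_ [phi [Hphi [Hsm Hconf]]]]]]].
 fold n N m in Hs, Hinj, Hsurj, Hphi, Hsm, Hconf.
 set (ys := s p1).
 assert (Sys : supp n ys) by (apply Hs; auto).
 assert (Phys : phi ys = p1) by (apply Hinj; [apply Hphi; auto | auto | apply Hphi; auto]).
 assert (Hj : exists j, (j < n)%nat /\ lm * sg p j < 0).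
 { destruct (Rlt_dec 0 lm).
   - exists 0%nat. split. unfold n; lia. unfold sg. replace (Nat.ltb 0 p) with true by (symmetry; apply Nat.ltb_lt; lia). lra.
   - exists p. split. unfold n; lia. unfold sg. rewrite Nat.ltb_irrefl. lra. }
 destruct Hj as [j [Hjn Hjs]].
 set (e := ebasis j).
 assert (Se : supp n e) by (intros i Hi; unfold e, ebasis; replace (Nat.eqb i j) with false by (symmetry; apply Nat.eqb_neq; lia); auto).
 destruct Hsm as [_ [_ Hsmooth]].
 destruct (fchoice (fun k (a : (pt -> R) * (pt -> R)) => (k < N)%nat ->
   (forall x, supp n x -> derivable_pt_lim (fun t => phi (vadd x (vscal t e)) k) 0 (fst a x)) /\
   (forall x, supp n x -> derivable_pt_lim (fun t => fst a (vadd x (vscal t e))) 0 (snd a x)))) as [DD HDD].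
 { intros k. destruct (lt_dec k N) as [Hk|Hk].
   - specialize (Hsmooth k Hk 2%nat). simpl in Hsmooth. destruct Hsmooth as [_ H1].
     destruct (H1 j Hjn) as [dg [Hdg [_ H2]]]. destruct (H2 j Hjn) as [d2 [Hd2 _]].
     exists (dg, d2). intros _. split; auto.
   - exists (fun _ => 0, fun _ => 0). intros; lia. }
 set (L := fun t => vadd ys (vscal t e)).
 assert (SL : forall t, supp n (L t)) by (intros t i Hi; unfold L, vadd, vscal; rewrite Sys, Se by auto; ring).
 assert (L0 : L 0 = ys) by (apply functional_extensionality; intros; unfold L, vadd, vscal; ring).
 set (F := fun t => phi (L t)).
 set (D1 := fun t : R => (fun k => fst (DD k) (L t)) : pt).
 set (D2v := (fun k => snd (DD k) ys) : pt).
 assert (dF : forall t k, (k < N)%nat -> derivable_pt_lim (fun t => F t k) t (D1 t k)).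
 { intros t k Hk. unfold F, D1, L. apply (line_shift (fun x => phi x k)). apply (HDD k Hk); auto. apply SL. }
 assert (dD1 : forall k, (k < N)%nat -> derivable_pt_lim (fun t => D1 t k) 0 (D2v k)).
 { intros k Hk. unfold D1, D2v, L. apply (HDD k Hk); auto. }
 assert (MF : forall t, M0 (F t)) by (intros; apply Hphi; auto).
 assert (NF : forall t, form m N (F t) (F t) = 0) by (intros t; destruct (proj1 (HM0 _) (MF t)) as [[_ [E _]] _]; auto).
 assert (G1 : forall t, form m N (F t) (D1 t) = 0).
 { intros t. assert (H := deriv_form m N F F (D1 t) (D1 t) t (dF t) (dF t)).
   assert (Hc : (fun t => form m N (F t) (F t)) = (fun _ => 0)) by (apply functional_extensionality; auto).
   rewrite Hc in H. assert (H0 := uniqueness_limite _ _ _ _ H (dpl_const 0 t)).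
   rewrite (form_sym m N (D1 t)) in H0. lra. }
 assert (G2 : form m N (D1 0) (D1 0) + form m N (F 0) D2v = 0).
 { assert (H := deriv_form m N F D1 (D1 0) D2v 0 (dF 0) dD1).
   assert (Hc : (fun t => form m N (F t) (D1 t)) = (fun _ => 0)) by (apply functional_extensionality; auto).
   rewrite Hc in H. symmetry. apply (uniqueness_limite _ _ _ _ (dpl_const 0 0) H). }
 destruct (Hconf ys Sys) as [mu [Hmu Hc]].
 assert (Cf : form m N (D1 0) (D1 0) = mu * sg p j).
 { rewrite <- (form_ebasis p n j Hjn). apply Hc; auto; intros k Hk; apply (dF 0 k Hk). }
 assert (F0 : F 0 = p1) by (unfold F; rewrite L0; auto).
 set (kf := fun t => form m N v1 (F t)).
 set (k1 := fun t => form m N v1 (D1 t)).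
 assert (dk : forall t, derivable_pt_lim kf t (k1 t)).
 { intros t. unfold kf, k1. eapply dpl_eq; [| apply (deriv_form m N (fun _ => v1) F (fun _ => 0) (D1 t) t); auto].
   unfold form at 1. rewrite (rsum_ext _ _ (fun _ => 0 * 0 + 0 * 0)) by (intros; ring). rewrite rsum_lin. ring.
   intros; apply dpl_const. }
 assert (dk1 : derivable_pt_lim k1 0 (form m N v1 D2v)).
 { unfold k1. eapply dpl_eq; [| apply (deriv_form m N (fun _ => v1) D1 (fun _ => 0) D2v 0); auto].
   unfold form at 1. rewrite (rsum_ext _ _ (fun _ => 0 * 0 + 0 * 0)) by (intros; ring). rewrite rsum_lin. ring.
   intros; apply dpl_const. }
 assert (k10 : k1 0 = 0) by (unfold k1; rewrite Hv1, <- F0, G1; ring).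
 assert (k0 : kf 0 = 0) by (unfold kf; rewrite F0; auto).
 assert (k2p : 0 < form m N v1 D2v).
 { rewrite Hv1, <- F0. assert (form m N (F 0) D2v = - (mu * sg p j)) by lra. rewrite H.
   assert (0 < lm * lm) by (apply Rsqr_pos_lt; auto).
   replace (/ lm * - (mu * sg p j)) with (mu * (- (lm * sg p j)) / (lm * lm)) by (field; auto).
   apply Rdiv_lt_0_compat; auto. nra. }
 destruct (second_pos kf k1 _ dk dk1 k10 k0 k2p) as [d [Hd [Kp Km]]].
 assert (InH : forall t, 0 < kf t -> Hwa p q w alpha (L t)).
 { intros t Ht. apply Himg. exists (F t). split. split; auto. apply HM1. split.
   destruct (proj1 (HM0 _) (MF t)); auto. unfold kf in Ht; lra.
   unfold F. symmetry. apply Hphi; auto. }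
 destruct (InH d Kp) as [_ Hwp]. destruct (InH (-d) Km) as [_ Hwm].
 assert (Hsum : form p n w (L d) + form p n w (L (-d)) = 2 * form p n w ys).
 { rewrite <- (Rmult_1_l (form p n w (L d))), <- (Rmult_1_l (form p n w (L (-d)))).
   rewrite <- form_lin_r, <- form_scal_r. apply form_ext; auto. intros; unfold L, vadd, vscal; ring. }
 assert (Hys : Hwa p q w alpha ys) by (split; auto; fold n in Hwp, Hwm |- *; lra).
 apply Himg in Hys. destruct Hys as [u [[M0u M1u] Hu]].
 assert (u = p1) by (apply Hinj; auto).
 subst u. auto.
Qed.

Lemma nullfix m k v y : form m k v v = 0 -> 0 < form m k v y ->
  form m k (fun i => y i + lam m k v y * v i) (fun i => y i + lam m k v y * v i) = 0 /\
  forall w, form m k w (fun i => y i + lam m k v y * v i) = form m k w y + lam m k v y * form m k w v.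
Proof. intros Hvv Hb. split.
 - rewrite (form_ext m k _ _ (fun i => 1 * y i + lam m k v y * v i) (fun i => 1 * y i + lam m k v y * v i)) by (intros; ring; auto).
   rewrite form_lin_l, !form_lin_r. rewrite Hvv, (form_sym m k y v). unfold lam. field. lra.
 - intros w. rewrite (form_ext m k _ _ w (fun i => 1 * y i + lam m k v y * v i)) by (intros; ring; auto).
   rewrite form_lin_r; ring. Qed.

Definition zJ m (v1 v2 : pt) (a b : R) : pt := fun i => sg m i * (a * v1 i + b * v2 i).

Lemma form_zJ m k x v1 v2 a b : form m k x (zJ m v1 v2 a b) = a * ed k x v1 + b * ed k x v2.
Proof. unfold form, ed, zJ. rewrite <- rsum_lin. apply rsum_ext. intros i _.
 assert (H := sg_sq m i). unfold sg in *. destruct (Nat.ltb i m); nra. Qed.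

Lemma ed_sym k x y : ed k x y = ed k y x.
Proof. unfold ed; apply rsum_ext; intros; ring. Qed.

Lemma two_pos m k v1 v2 : 0 < ed k v1 v1 -> 0 < ed k v2 v2 ->
  (exists a b, 0 < form m k v1 (zJ m v1 v2 a b) /\ 0 < form m k v2 (zJ m v1 v2 a b)) \/
  (exists c, c < 0 /\ forall i, (i < k)%nat -> v2 i = c * v1 i).
Proof.
 intros HA HC. set (A := ed k v1 v1) in *. set (C := ed k v2 v2) in *. set (g := ed k v1 v2).
 assert (Hg : ed k v2 v1 = g) by (unfold g; apply ed_sym).
 destruct (Rle_lt_dec 0 g).
 - left. exists 1, 1. rewrite !form_zJ. fold A C g. rewrite Hg. split; nra.
 - destruct (Rlt_dec 0 (A * C - g * g)).
   + left. exists (C - g), (A - g). rewrite !form_zJ. fold A C g. rewrite Hg. split; nra.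
   + right. exists (g / A). split. apply Rdiv_neg_pos; auto.
     set (d := fun i => v2 i - g / A * v1 i).
     assert (Ed : ed k d d = C - g * g / A).
     { unfold ed, d. rewrite (rsum_ext _ _ (fun i => 1 * (v2 i * v2 i) + 1 * ((-2 * (g/A)) * (v1 i * v2 i) + (g/A*(g/A)) * (v1 i * v1 i)))).
       rewrite rsum_lin, rsum_lin. fold (ed k v2 v2) (ed k v1 v2) (ed k v1 v1). fold A C g. field. lra.
       intros; ring. }
     assert (Ed0 : ed k d d <= 0). { rewrite Ed. assert (C - g*g/A = - ((g*g - A*C) * / A)) by (field; lra).
       rewrite H. assert (0 <= (g*g - A*C) * / A). apply Rmult_le_pos. lra. apply Rlt_le, Rinv_0_lt_compat; auto. lra. }
     assert (Hz : forall i, (i<k)%nat -> d i * d i = 0).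
     { apply rsum_zero. intros; apply Rle_0_sqr. assert (H := ed_nonneg k d). unfold ed in *. lra. }
     intros i Hi. specialize (Hz i Hi). apply Rsqr_0_uniq in Hz. unfold d in Hz. lra.
Qed.

Lemma Eint_iota p q x : Eint p q x -> Eint p q (iota x).
Proof. intros [S [Nf U]]. unfold iota. split; [|split].
 - intros i Hi; rewrite S by auto; ring.
 - rewrite form_neg_l, form_sym, form_neg_l, Nf; ring.
 - rewrite <- U. apply rsum_ext; intros; ring. Qed.

Lemma patch_ne p q M : mink_patch p q M -> exists x, M x.
Proof. intros [_ [_ [_ [_ [H _]]]]]. auto. Qed.

Theorem fact5p4 (p q : nat) (hp : (2 <= p)%nat) (hq : (2 <= q)%nat)
  (M0 M1 M2 : pt -> Prop) (s : pt -> pt) :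
  mink_patch p q M0 -> mink_patch p q M1 -> mink_patch p q M2 ->
  ~ set_eq M1 (image iota M2) ->
  is_stereo p q M0 s ->
  (exists w alpha, in_cone p q w /\ (exists i, (i < p + q)%nat /\ w i <> 0) /\
     set_eq (image s (inter M0 M1)) (Hwa p q w alpha)) ->
  (exists w alpha, in_cone p q w /\ (exists i, (i < p + q)%nat /\ w i <> 0) /\
     set_eq (image s (inter M0 M2)) (Hwa p q w alpha)) ->
  (forall u, ~ (M0 u /\ M1 u /\ M2 u)) ->
  forall u, image iota M0 u -> M1 u \/ M2 u.
Proof.
 intros Hm0 Hm1 Hm2 Hne Hst [w1 [a1 [_ [_ Him1]]]] [w2 [a2 [_ [_ Him2]]]] Hdisj u [x [M0x Hux]].
 destruct (patch_ne _ _ _ Hm1) as [x1 Mx1]. destruct (patch_ne _ _ _ Hm2) as [x2 Mx2].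
 destruct (patch_char _ _ _ Hm0) as [v0 [Sv0 [Nv0 C0]]].
 destruct (patch_char _ _ _ Hm1) as [v1 [Sv1 [Nv1 C1]]].
 destruct (patch_char _ _ _ Hm2) as [v2 [Sv2 [Nv2 C2]]].
 assert (O1 : form (p+1) (p+q+2) v0 v1 = 0) by (apply (ortho p q M0 M1 s v0 v1 w1 a1); auto; lia || eauto).
 assert (O2 : form (p+1) (p+q+2) v0 v2 = 0) by (apply (ortho p q M0 M2 s v0 v2 w2 a2); auto; lia || eauto).
 set (m := (p+1)%nat) in *. set (N := (p+q+2)%nat) in *.
 subst u. assert (Eu : Eint p q (iota x)) by (apply Eint_iota; apply C0 in M0x; tauto).
 assert (Pu : form m N v0 (iota x) < 0).
 { unfold iota. rewrite (form_ext m N _ _ v0 (fun i => -1 * x i)) by (intros; ring; auto).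
   rewrite form_scal_r. apply C0 in M0x. destruct M0x. lra. }
 destruct (Rlt_dec 0 (form m N v1 (iota x))) as [Q1|Q1]. left; apply C1; split; auto; lra.
 destruct (Rlt_dec 0 (form m N v2 (iota x))) as [Q2|Q2]. right; apply C2; split; auto; lra.
 exfalso. apply Rnot_lt_le in Q1. apply Rnot_lt_le in Q2.
 assert (HA : 0 < ed N v1 v1). { apply (ed_pos_of_form m N x1). rewrite form_sym. apply C1 in Mx1. destruct Mx1. lra. }
 assert (HC : 0 < ed N v2 v2). { apply (ed_pos_of_form m N x2). rewrite form_sym. apply C2 in Mx2. destruct Mx2. lra. }
 destruct (two_pos m N v1 v2 HA HC) as [[a [b [Z1 Z2]]] | [c [Hc Hv]]].
 - set (z := zJ m v1 v2 a b) in *.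
   assert (Sz : supp N z) by (intros i Hi; unfold z, zJ; rewrite Sv1, Sv2 by auto; ring).
   set (a0 := - form m N v0 (iota x)). set (b0 := form m N v0 z).
   assert (Ha0 : 0 < a0) by (unfold a0; lra).
   set (dl := a0 / (2 * (Rabs b0 + 1))).
   assert (Hab : 0 < Rabs b0 + 1) by (assert (H := Rabs_pos b0); lra).
   assert (Hdl : 0 < dl) by (unfold dl; apply Rdiv_lt_0_compat; lra).
   assert (Hdlb : dl * Rabs b0 < a0 / 2).
   { unfold dl. replace (a0 / (2 * (Rabs b0 + 1)) * Rabs b0) with (a0 / 2 * (Rabs b0 / (Rabs b0 + 1))) by (field; lra).
     assert (Rabs b0 / (Rabs b0 + 1) < 1). { apply (Rmult_lt_reg_r (Rabs b0 + 1)); auto.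
       replace (Rabs b0 / (Rabs b0 + 1) * (Rabs b0 + 1)) with (Rabs b0) by (field; lra). lra. }
     nra. }
   assert (Hb0 : - Rabs b0 <= b0) by (destruct (Rabs_le_b b0 (Rabs b0) (Rle_refl _)); auto).
   set (y := fun i => -1 * iota x i + dl * z i).
   assert (Ea0 : form m N v0 (iota x) = - a0) by (unfold a0; ring).
   assert (Hdb : dl * b0 >= - (dl * Rabs b0)) by nra.
   assert (Y0 : 0 < form m N v0 y) by (unfold y; rewrite form_lin_r; rewrite Ea0; fold b0; lra).
   assert (Y1 : 0 < form m N v1 y) by (unfold y; rewrite form_lin_r; nra).
   assert (Y2 : 0 < form m N v2 y) by (unfold y; rewrite form_lin_r; nra).
   destruct (nullfix m N v0 y Nv0 Y0) as [Nx Fx].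
   set (xx := fun i => y i + lam m N v0 y * v0 i) in *.
   assert (Sxx : supp N xx).
   { destruct Eu as [Su _]. intros i Hi; unfold xx, y, z, zJ; rewrite Su, Sv1, Sv2, Sv0 by auto; ring. }
   assert (X0 : 0 < form m N v0 xx) by (rewrite Fx, Nv0; lra).
   assert (X1 : 0 < form m N v1 xx) by (rewrite Fx, (form_sym m N v1 v0), O1; lra).
   assert (X2 : 0 < form m N v2 xx) by (rewrite Fx, (form_sym m N v2 v0), O2; lra).
   assert (Ed : 0 < ed N xx xx) by (apply (ed_pos_of_form m N v0); lra).
   apply (Hdisj (nrmz N xx)). split; [|split].
   + apply C0. split. apply normalize_E; auto. apply Rlt_gt, normalize_sign; auto.
   + apply C1. split. apply normalize_E; auto. apply Rlt_gt, normalize_sign; auto.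
   + apply C2. split. apply normalize_E; auto. apply Rlt_gt, normalize_sign; auto.
 - apply Hne. assert (F21 : forall X, form m N v2 X = c * form m N v1 X).
   { intros X. rewrite form_sym, (form_sym m N v1). rewrite <- form_scal_r. apply form_ext; auto. }
   intros yy. split.
   + intros M1y. exists (iota yy). split.
     * apply C2. apply C1 in M1y. destruct M1y as [Ey Py]. split. apply Eint_iota; auto.
       rewrite F21. unfold iota. rewrite (form_ext m N _ _ v1 (fun i => -1 * yy i)) by (intros; ring; auto).
       rewrite form_scal_r. fold m N in Py. nra.
     * apply functional_extensionality; intros; unfold iota; ring.
   + intros [x2' [M2x Hy]]. subst yy. apply C2 in M2x. destruct M2x as [Ex Px]. apply C1. split. apply Eint_iota; auto.
     unfold iota. rewrite (form_ext m N _ _ v1 (fun i => -1 * x2' i)) by (intros; ring; auto).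
     rewrite form_scal_r. fold m N in Px. rewrite F21 in Px. nra.
Qed.
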